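(* Let $0<r_j<\infty$ and $0<s_j<\infty$ for $j=1,\dots,n$, and let $\gamma(\mathbf{r})=\otimes_{j=1}^n\gamma(r_j)$, $\gamma(\mathbf{s})=\otimes_{j=1}^n\gamma(s_j)$. Then: (1) If $r_j\ge s_j$ for all $j$, then $D_\alpha(\gamma(\mathbf{r})\|\gamma(\mathbf{s}))<\infty$ for every $\alpha\in(0,1)\cup(1,\infty)$. (2) If $r_j<s_j$ for some $j$, then for $\alpha\in(0,1)\cup(1,\infty)$, $$D_\alpha(\gamma(\mathbf{r})\|\gamma(\mathbf{s}))<\infty\iff\alpha<\min\left\{\frac{s_j}{s_j-r_j}: j\in\{1,\dots,n\}\text{ such that } r_j<s_j\right\}.$$
   Context: One-mode Fock space: $\ell^2(\mathbb{Z}_{\ge 0})$ with orthonormal particle basis $\{|k\rangle\}$; $n$-mode space is the $n$-fold tensor product. For $0<s<\infty$, the thermal state is $\gamma(s)=(1-e^{-s})\sum_{k\ge0}e^{-ks}|k\rangle\langle k|$. For states $\rho=\sum_i p_i|x_i\rangle\langle x_i|$, $\sigma=\sum_j q_j|y_j\rangle\langle y_j|$ (spectral decompositions with orthonormal bases), the Petz–Rényi relative entropy is $D_\alpha(\rho\|\sigma)=\frac{1}{\alpha-1}\log\sum_{i,j}p_i^\alpha q_j^{1-\alpha}|\langle x_i|y_j\rangle|^2$ for $\alpha\in(0,1)\cup(1,\infty)$. *)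

(* Defs.v *)
From HB Require Import structures.
From mathcomp Require Import all_boot all_order all_algebra.
From mathcomp Require Import all_classical all_reals all_analysis.
Set Implicit Arguments. Unset Strict Implicit. Unset Printing Implicit Defensive.
Import Order.TTheory GRing.Theory Num.Theory.
Local Open Scope ring_scope.

Section Defs.
Variable R : realType.

Definition eln (x : \bar R) : \bar R :=
  match x with
  | EFin r => if r == 0 then -oo%E else (ln r)%:E
  | +oo%E => +oo%E
  | -oo%E => -oo%E
  end.

(* Petz-Renyi relative entropy of rho = sum_i p_i |x_i><x_i| and
   sigma = sum_j q_j |y_j><y_j| (spectral decompositions), where
   ov i j = |<x_i|y_j>|^2 :
     D_a = 1/(a-1) log sum_{i,j} p_i^a q_j^(1-a) |<x_i|y_j>|^2,
   the (nonnegative) double series being summed in [0,+oo]. *)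
Definition petz_D (I J : choiceType) (p : I -> R) (q : J -> R)
  (ov : I -> J -> R) (a : R) : \bar R :=
  ((a - 1)^-1)%:E *
  eln (esum [set: I * J] (fun ij => (p ij.1 `^ a * q ij.2 `^ (1 - a) * ov ij.1 ij.2)%:E)).

(* Index set of the orthonormal particle (Fock) basis of the n-mode space:
   |k> = |k_1> (x) ... (x) |k_n>, k : 'I_n -> nat. *)
Definition fock_index (n : nat) := {ffun 'I_n -> nat}.

(* |<k|k'>|^2 for the orthonormal product Fock basis vectors. *)
Definition fock_overlap (n : nat) (k k' : fock_index n) : R := (k == k')%:R.

(* Eigenvalue of the one-mode thermal state gamma(s) on |m>:
   (1 - e^{-s}) e^{-m s}. *)
Definition thermal1 (s : R) (m : nat) : R := (1 - expR (- s)) * expR (- (m%:R * s)).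

Definition thermal (n : nat) (s : 'I_n -> R) (k : fock_index n) : R :=
  \prod_(j < n) thermal1 (s j) (k j).

(* D_alpha(gamma(r) || gamma(s)), both states diagonal in the Fock basis. *)
Definition D_thermal (n : nat) (r s : 'I_n -> R) (a : R) : \bar R :=
  @petz_D (fock_index n) (fock_index n) (thermal r) (thermal s) (@fock_overlap n) a.

End Defs.

(* Main.v *)
Require Import Defs.
From HB Require Import structures.
From mathcomp Require Import all_boot all_order all_algebra.
From mathcomp Require Import all_classical all_reals all_analysis.
From mathcomp Require Import finmap.
From mathcomp Require Import ring lra.
Import Order.TTheory GRing.Theory Num.Theory.
Local Open Scope ring_scope.

Set Implicit Arguments. Unset Strict Implicit. Unset Printing Implicit Defensive.
Section Aux.
Variable R : realType.

Definition uu (s : R) (m : nat) : R := ln (1 - expR (- s)) - m%:R * s.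

Lemma thermal1E (s : R) m : 0 < s -> thermal1 s m = expR (uu s m).
Proof.
move=> s0; have h : 0 < 1 - expR (- s) by rewrite subr_gt0 expR_lt1 oppr_lt0.
rewrite /uu /thermal1 -[in LHS](lnK (x := 1 - expR (- s))) ?posrE //.
by rewrite -expRD; congr expR; rewrite mulrN.
Qed.

Lemma thermalE n (s : 'I_n -> R) k : (forall j, 0 < s j) ->
  thermal s k = expR (\sum_(j < n) uu (s j) (k j)).
Proof.
move=> s0; rewrite expR_sum /thermal; apply: eq_bigr => j _.
exact: thermal1E.
Qed.

Lemma powR_expR (u a : R) : expR u `^ a = expR (a * u).
Proof. by rewrite /powR gt_eqF ?expR_gt0 // expRK. Qed.

Definition LL (a rr ss : R) := a * ln (1 - expR (- rr)) + (1 - a) * ln (1 - expR (- ss)).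
Definition cc (a rr ss : R) := a * rr + (1 - a) * ss.
Definition gg (a rr ss : R) (m : nat) := expR (LL a rr ss - m%:R * cc a rr ss).

Lemma termE n (r s : 'I_n -> R) a k : (forall j, 0 < r j) -> (forall j, 0 < s j) ->
  thermal r k `^ a * thermal s k `^ (1 - a) = \prod_(j < n) gg a (r j) (s j) (k j).
Proof.
move=> r0 s0; rewrite !thermalE // !powR_expR -expRD /gg -expR_sum; congr expR.
rewrite !mulr_sumr -big_split /=; apply: eq_bigr => j _.
rewrite /LL /cc /uu; ring.
Qed.

Lemma gg_gt0 a rr ss m : 0 < gg a rr ss m.
Proof. exact: expR_gt0. Qed.

Lemma geom_bound (q : R) N : 0 <= q < 1 -> \sum_(m < N) q ^+ m <= (1 - q)^-1.
Proof.
move=> /andP[q0 q1]; have q1' : 0 < 1 - q by rewrite subr_gt0.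
elim: N => [|N IH]; first by rewrite big_ord0 invr_ge0 ltW.
rewrite big_ord_recl expr0 (eq_bigr (fun i : 'I_N => q * q ^+ i)); last first.
  by move=> i _; rewrite /bump /= exprS.
rewrite -mulr_sumr.
apply: (le_trans (_ : _ <= 1 + q * (1 - q)^-1)); first by rewrite lerD2l ler_wpM2l.
rewrite [X in X <= _](_ : _ = (1 - q)^-1) //.
by field; rewrite lt0r_neq0.
Qed.

Lemma sum_gg_le a rr ss N : 0 < cc a rr ss ->
  \sum_(m < N) gg a rr ss m <= expR (LL a rr ss) / (1 - expR (- cc a rr ss)).
Proof.
move=> c0; rewrite /gg.
rewrite (eq_bigr (fun m : 'I_N => expR (LL a rr ss) * expR (- cc a rr ss) ^+ m)); last first.
  by move=> m _; rewrite -expRM_natl expRD mulrN.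
rewrite -mulr_sumr ler_wpM2l ?expR_ge0 // geom_bound //.
by rewrite expR_ge0 expR_lt1 oppr_lt0.
Qed.

End Aux.
Section P2.
Local Open Scope classical_set_scope.

Lemma esum_diag (R : realType) (I : choiceType) (f : I -> I -> R) :
  (forall i j, 0 <= f i j) ->
  esum [set: I * I] (fun ij => (f ij.1 ij.2 * (ij.1 == ij.2)%:R)%:E) =
  esum [set: I] (fun i => (f i i)%:E).
Proof.
move=> f0.
rewrite (esumID [set ij | ij.1 = ij.2]); last first.
  by move=> ij _; rewrite lee_fin mulr_ge0.
rewrite [X in _ + X]esum1 ?adde0; last first.
  move=> ij [_ /=] /eqP /negbTE ->; by rewrite mulr0.
rewrite (_ : [set: I * I] `&` _ = (fun i => (i, i)) @` [set: I]); last first.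
  apply/seteqP; split.
    by move=> [i j] [_ /= ->]; exists j.
  by move=> _ [i _ <-]; split.
rewrite esum_image; last by move=> x y _ _ [].
by apply: eq_esum => i _ /=; rewrite eqxx mulr1.
Qed.

Lemma esum_prod_ub (R : realType) n (g : 'I_n -> nat -> R) (B : 'I_n -> R) :
  (forall j m, 0 <= g j m) -> (forall j N, \sum_(m < N) g j m <= B j) ->
  (esum [set: fock_index n] (fun k => (\prod_(j < n) g j (k j))%:E) <= (\prod_(j < n) B j)%:E)%E.
Proof.
move=> g0 gB.
apply: ge_ereal_sup => _ [X [finX _] <-].
pose M := (\max_(x <- finmap.enum_fset (fset_set X)) \max_(j < n) x j)%N.
have XM : forall x, X x -> forall j, (x j <= M)%N.
  move=> x Xx j; apply: (leq_trans (leq_bigmax j)).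
  rewrite /M; apply: (@leq_bigmax_seq _ _ xpredT (fun x : fock_index n => \max_(j < n) x j)) => //.
  change (x \in fset_set X); rewrite in_fset_set //; exact/mem_set.
pose phi := fun (h : {ffun 'I_n -> 'I_M.+1}) => ([ffun j => val (h j)] : fock_index n).
have phiinj : injective phi.
  move=> h1 h2 /ffunP e; apply/ffunP => j; apply/val_inj; have := e j; by rewrite !ffunE.
have XY : {subset X <= phi @` [set: {ffun 'I_n -> 'I_M.+1}]}.
  move=> x /set_mem Xx; apply/mem_set.
  exists [ffun j => inord (x j)] => //.
  apply/ffunP => j; rewrite /phi !ffunE /= inordK //; exact: XM.
apply: (le_trans (lee_fsum_nneg_subset finX (finite_image _ finite_finset) XY _)).
  by move=> t _; rewrite lee_fin; apply: prodr_ge0 => j _.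
rewrite fsbig_image; last by move=> x y _ _; exact: phiinj.
rewrite (_ : [set: {ffun 'I_n -> 'I_M.+1}] = [set` enum {ffun 'I_n -> 'I_M.+1}]); last first.
  by apply/seteqP; split => x //= _; rewrite mem_enum.
rewrite -fsbig_seq ?enum_uniq // big_enum /= sumEFin lee_fin.
rewrite (eq_bigr (fun h : {ffun 'I_n -> 'I_M.+1} => \prod_(j < n) g j (h j))); last first.
  by move=> h _; apply: eq_bigr => j _; rewrite ffunE.
rewrite -(bigA_distr_bigA (fun j (m : 'I_M.+1) => g j m)).
apply: ler_prod => j _; rewrite sumr_ge0 //=.
exact: gB.
Qed.

Lemma esum_ge_pt (R : realType) (I : choiceType) (F : I -> R) k0 :
  0 <= F k0 -> ((F k0)%:E <= esum [set: I] (fun k => (F k)%:E))%E.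
Proof.
move=> F0; apply: esum_ge; exists [set k0].
  by split => //; exact: finite_set1.
by rewrite fsbig_set1.
Qed.

Lemma esum_inf (R : realType) (I : choiceType) (F : I -> R) (e : nat -> I) (C : R) :
  (forall k, 0 <= F k) -> injective e -> 0 < C -> (forall m, C <= F (e m)) ->
  esum [set: I] (fun k => (F k)%:E) = +oo%E.
Proof.
move=> F0 einj C0 CF.
have key : forall N : nat, ((N%:R * C)%:E <= esum [set: I] (fun k => (F k)%:E))%E.
  move=> N; apply: esum_ge; exists (e @` `I_N).
    by split => //; exact: finite_image (finite_II N).
  rewrite fsbig_image; last by move=> x y _ _; exact: einj.
  rewrite -(fsbig_ord _ N (fun m => (F (e m))%:E)) sumEFin lee_fin.
  apply: (le_trans _ (ler_sum _ (fun (m : 'I_N) _ => CF m))).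
  by rewrite sumr_const card_ord mulr_natl.
have : (0 <= esum [set: I] (fun k => (F k)%:E))%E by apply: esum_ge0 => k _; rewrite lee_fin.
case: (esum _ _) key => [y| |] key // _.
have := key (Num.Def.trunc (y / C)).+1.
rewrite lee_fin => h.
have := truncnS_gt (y / C).
rewrite ltr_pdivrMr // => h2.
by have := lt_le_trans h2 h; rewrite ltxx.
Qed.

End P2.

Section Main.
Local Open Scope classical_set_scope.
Variables (R : realType) (n : nat) (r s : 'I_n -> R) (a : R).
Hypotheses (hr : forall j, 0 < r j) (hs : forall j, 0 < s j).

Let S := esum [set: fock_index n]
  (fun k => (\prod_(j < n) gg a (r j) (s j) (k j))%:E).

Lemma DE : D_thermal r s a = (((a - 1)^-1)%:E * eln S)%E.
Proof.
rewrite /D_thermal /petz_D /fock_overlap; congr (_ * eln _)%E.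
rewrite (@esum_diag _ _ (fun i j => thermal r i `^ a * thermal s j `^ (1 - a))); last first.
  by move=> i j; rewrite mulr_ge0 ?powR_ge0.
by apply: eq_esum => k _; rewrite termE.
Qed.

Lemma D_fin : (forall j, 0 < cc a (r j) (s j)) -> (D_thermal r s a < +oo)%E.
Proof.
move=> c0; rewrite DE.
have ub : (S <= (\prod_(j < n) (expR (LL a (r j) (s j)) / (1 - expR (- cc a (r j) (s j)))))%:E)%E.
  apply: (@esum_prod_ub _ _ (fun j m => gg a (r j) (s j) m)) => [j m|j N]; first exact: ltW (gg_gt0 _ _ _ _).
  exact: sum_gg_le.
pose k0 : fock_index n := [ffun => 0%N].
have lb : ((\prod_(j < n) gg a (r j) (s j) (k0 j))%:E <= S)%E.
  apply: (@esum_ge_pt _ _ (fun k : fock_index n => \prod_(j < n) gg a (r j) (s j) (k j))).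
  by apply: prodr_ge0 => j _; exact: ltW (gg_gt0 _ _ _ _).
have p0 : 0 < \prod_(j < n) gg a (r j) (s j) (k0 j).
  by apply: prodr_gt0 => j _; exact: gg_gt0.
move: ub lb; case: S => [y| |] //= ub lb.
have y0 : 0 < y by rewrite lee_fin in lb; exact: lt_le_trans p0 lb.
by rewrite gt_eqF //= ltry.
Qed.

Lemma D_inf : 1 < a -> (exists j, cc a (r j) (s j) <= 0) -> ~ (D_thermal r s a < +oo)%E.
Proof.
move=> a1 [j0 cj0]; rewrite DE.
have -> : S = +oo%E.
  apply: (@esum_inf _ _ (fun k : fock_index n => \prod_(j < n) gg a (r j) (s j) (k j))
    (fun m => ([ffun j => if j == j0 then m else 0%N] : fock_index n))
    (\prod_(j < n) expR (LL a (r j) (s j)))).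
  - by move=> k; apply: prodr_ge0 => j _; exact: ltW (gg_gt0 _ _ _ _).
  - by move=> x y /ffunP /(_ j0); rewrite !ffunE eqxx.
  - by apply: prodr_gt0 => j _; exact: expR_gt0.
  - move=> m; apply: ler_prod => j _; rewrite expR_ge0 /= /gg ler_expR ffunE.
    rewrite lerDl oppr_ge0; case: eqP => [->|_]; last by rewrite mul0r.
    by rewrite mulr_ge0_le0.
rewrite /= gt0_muley ?ltxx // lte_fin invr_gt0 subr_gt0 //.
Qed.

End Main.


Lemma cc_ge (R : realType) (a rr ss : R) : 0 < a -> 0 < ss -> ss <= rr -> 0 < cc a rr ss.
Proof.
move=> a0 s0 sr; rewrite /cc.
have h : 0 <= a * (rr - ss) by apply: mulr_ge0; [exact: ltW | rewrite subr_ge0].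
lra.
Qed.

Lemma cc_lt1 (R : realType) (a rr ss : R) : 0 < a -> a < 1 -> 0 < rr -> 0 < ss -> 0 < cc a rr ss.
Proof.
move=> a0 a1 r0 s0; rewrite /cc.
have h1 : 0 < a * rr by rewrite mulr_gt0.
have h2 : 0 < (1 - a) * ss by rewrite mulr_gt0 // subr_gt0.
lra.
Qed.

Lemma cc_lt (R : realType) (a rr ss : R) : rr < ss ->
  (0 < cc a rr ss) = (a < ss / (ss - rr)).
Proof.
move=> rs; have d0 : 0 < ss - rr by rewrite subr_gt0.
rewrite ltr_pdivlMr // /cc.
apply/idP/idP => h; lra.
Qed.

Theorem corollary3p4 (R : realType) (n : nat) (r s : 'I_n -> R)
  (hr : forall j, 0 < r j) (hs : forall j, 0 < s j) :
  ((forall j, s j <= r j) ->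
     forall a : R, 0 < a -> a != 1 -> (D_thermal r s a < +oo)%E)
  /\
  ((exists j, r j < s j) ->
     forall a : R, 0 < a -> a != 1 ->
       ((D_thermal r s a < +oo)%E <->
        (a%:E < \big[mine/+oo%E]_(j < n | (r j < s j)%R) (s j / (s j - r j))%:E)%E)).
Proof.
split.
  move=> hsr a a0 a1; apply: D_fin => // j; exact: cc_ge.
move=> [j0 hj0] a a0 a1; split.
  move=> hD; apply: lt_bigmin; first exact: ltry.
  move=> j rsj; rewrite lte_fin -cc_lt //.
  case: (ltP 0 (cc a (r j) (s j))) => // cle.
  exfalso; apply: (@D_inf _ _ r s a hr hs _ _ hD); last by exists j.
  case: (ltgtP a 1) a1 => // alt1 _.
  have := cc_lt1 a0 alt1 (hr j) (hs j); lra.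
move=> hmin; apply: D_fin => // j.
case: (ltgtP a 1) a1 => // [alt1|agt1] _; first exact: cc_lt1.
case: (ltP (r j) (s j)) => [rsj|srj]; last exact: cc_ge.
rewrite cc_lt //; rewrite -lte_fin.
apply: (lt_le_trans hmin); exact: bigmin_le_cond.
Qed.
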